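(* Let $r\ge 1$ be an integer and let $G$ be an $r$-regular finite simple graph of order $n$. Then $$\gamma^{0}_{st}(G)=n-2\,\gamma_{\times\lceil r/2\rceil,t}(G).$$
   Context: For a vertex $v$ of a graph $G=(V,E)$, $N(v)$ is its open neighborhood, and for $f:V\to\mathbb{R}$ and $B\subseteq V$ write $f(B)=\sum_{v\in B}f(v)$; $f(V)$ is the weight of $f$. An inverse signed total dominating function (ISTDF) of $G$ is a function $f:V\to\{-1,1\}$ such that $f(N(v))\le 0$ for every $v\in V$; $\gamma^{0}_{st}(G)$ is the maximum weight of an ISTDF of $G$. For an integer $1\le k\le \delta(G)$, a $k$-tuple total dominating set of $G$ is a set $D\subseteq V$ with $|N(v)\cap D|\ge k$ for all $v\in V$; $\gamma_{\times k,t}(G)$ is the minimum cardinality of a $k$-tuple total dominating set. *)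

(* Defs.v *)
From mathcomp Require Import all_boot all_order all_algebra.
Set Implicit Arguments. Unset Strict Implicit. Unset Printing Implicit Defensive.
Import Order.TTheory GRing.Theory Num.Theory.

Definition simple_graph (T : finType) (e : rel T) : Prop :=
  symmetric e /\ irreflexive e.

Definition nbhd (T : finType) (e : rel T) (v : T) : {set T} := [set u | e v u].

Definition regular (T : finType) (e : rel T) (r : nat) : Prop :=
  forall v : T, #|nbhd e v| = r.

Definition fsum (T : finType) (f : T -> int) (B : {set T}) : int :=
  (\sum_(v in B) f v)%R.

Definition ISTDF (T : finType) (e : rel T) (f : T -> int) : Prop :=
  (forall v, f v = 1%R \/ f v = (-1)%R) /\
  (forall v, (fsum f (nbhd e v) <= 0)%R).

Definition is_inv_signed_total_dom_number (T : finType) (e : rel T) (w : int) : Prop :=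
  (exists f, ISTDF e f /\ fsum f [set: T] = w) /\
  (forall f, ISTDF e f -> (fsum f [set: T] <= w)%R).

Definition ktuple_tds (T : finType) (e : rel T) (k : nat) (D : {set T}) : bool :=
  [forall v, k <= #|nbhd e v :&: D|].

(* gamma_{x k, t}(G): minimum cardinality of a k-tuple total dominating set
   (the full vertex set bounds the minimum; it is a k-tuple TDS when k <= delta). *)
Definition ktuple_tdom (T : finType) (e : rel T) (k : nat) : nat :=
  \big[minn/#|T|]_(D : {set T} | ktuple_tds e k D) #|D|.

(* Main.v *)
Require Import Defs.
From mathcomp Require Import all_boot all_order all_algebra.
From mathcomp Require Import zify.
Import Order.TTheory GRing.Theory Num.Theory.
Local Open Scope ring_scope.
Set Implicit Arguments.

Definition fD (T : finType) (D : {set T}) (v : T) : int :=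
  if v \in D then (-1)%R else 1%R.

Lemma fsum_fD (T : finType) (D B : {set T}) :
  fsum (fD D) B = (#|B|%:Z - 2%:Z * #|B :&: D|%:Z)%R.
Proof.
rewrite /fsum (bigID (fun v => v \in D)) /=.
have -> : \sum_(i in B | i \in D) fD D i = \sum_(i in B :&: D) (-1 : int).
  apply: eq_big => [i|i /andP[_ H]]; [by rewrite in_setI | by rewrite /fD H].
have -> : \sum_(i in B | i \notin D) fD D i = \sum_(i in B :\: D) (1 : int).
  apply: eq_big => [i|i /andP[_ /negbTE H]]; [by rewrite in_setD andbC | by rewrite /fD H].
rewrite !sumr_const.
have := cardsID D B; rewrite setIC => <-.
rewrite mulNrn !natz PoszD; lia.
Qed.

Lemma tdom_le (T : finType) (e : rel T) k (D : {set T}) :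
  ktuple_tds e k D -> (ktuple_tdom e k <= #|D|)%N.
Proof.
move=> H; rewrite /ktuple_tdom.
have : D \in index_enum {set T} by rewrite mem_index_enum.
elim: (index_enum _) => [|x s IH] //.
rewrite inE big_cons; case/orP => [/eqP <-|/IH h].
- by rewrite H geq_minl.
- case: ifP => _ //; exact: leq_trans (geq_minr _ _) h.
Qed.

Lemma tdom_ex (T : finType) (e : rel T) k :
  ktuple_tds e k [set: T] ->
  exists D, ktuple_tds e k D /\ ktuple_tdom e k = #|D|.
Proof.
move=> HT; rewrite /ktuple_tdom.
apply: (big_ind (fun x => exists D, ktuple_tds e k D /\ x = #|D|)).
- by exists [set: T]; rewrite cardsT.
- move=> x y [D1 [H1 ->]] [D2 [H2 ->]].
  case: (leqP #|D1| #|D2|) => h.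
  + by exists D1; split => //; apply/minn_idPl.
  + by exists D2; split => //; apply/minn_idPr; apply: ltnW.
- by move=> D HD; exists D.
Qed.

Lemma uphalf_le r k : (uphalf r <= k)%N = (r <= k.*2)%N.
Proof.
rewrite uphalf_half; have := odd_double_half r; rewrite -mul2n -(mul2n k).
move: (odd r) (r./2) => b h; case: b => /= E; rewrite -E;
  apply/idP/idP => /ssrnat.leP ? ; apply/ssrnat.leP; lia.
Qed.

Local Close Scope ring_scope.

Theorem mainTheorem5 (T : finType) (e : rel T) (r : nat) :
  simple_graph e -> 1 <= r -> regular e r ->
  is_inv_signed_total_dom_number e
    ((#|T|)%:Z - 2%:Z * (ktuple_tdom e (uphalf r))%:Z)%R.
Proof.
move=> _ _ Hreg.
have key : forall D : {set T}, (forall v, fsum (fD D) (nbhd e v) <= 0)%R <-> ktuple_tds e (uphalf r) D.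
  move=> D; split.
  - move=> H; apply/forallP => v; have := H v; rewrite fsum_fD Hreg uphalf_le.
    move=> h; have: (r%:Z <= 2%:Z * #|nbhd e v :&: D|%:Z)%R by lia.
    rewrite -PoszM lez_nat; lia.
  - move=> /forallP H v; have := H v; rewrite fsum_fD Hreg uphalf_le => h.
    have: (r%:Z <= 2%:Z * #|nbhd e v :&: D|%:Z)%R by rewrite -PoszM lez_nat; lia.
    lia.
have HT : ktuple_tds e (uphalf r) [set: T].
  apply/forallP => v; rewrite setIT Hreg uphalf_le; lia.
split.
- have [D [HD ->]] := @tdom_ex _ _ _ HT.
  exists (fD D); split; last by rewrite fsum_fD setTI cardsT.
  split; last by apply/key.
  by move=> v; rewrite /fD; case: (v \in D); [right|left].
- move=> f [Hf Hn].
  pose D := [set v | f v == (-1)%R].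
  have fE : forall v, f v = fD D v.
    move=> v; rewrite /fD inE; case: (Hf v) => ->; by [].
  have Hs : forall B, fsum f B = fsum (fD D) B.
    by move=> B; apply: eq_bigr => v _; apply: fE.
  have HD : ktuple_tds e (uphalf r) D by apply/key => v; rewrite -Hs.
  have := @tdom_le _ _ _ _ HD.
  rewrite Hs fsum_fD setTI cardsT => h.
  have : ((ktuple_tdom e (uphalf r))%:Z <= #|D|%:Z)%R by rewrite lez_nat.
  lia.
Qed.
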